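(* Let $\mathcal{T}$ be a trifocal Grassmann tensor of dimension $n_1\times n_2\times n_3$ satisfying the Genericity Assumption, with canonical form $\mathcal{T}^c$ and multilinear rank $(r_1,r_2,r_3)$. Let $V_j\in GL(n_j)$ ($j=1,2,3$) be invertible matrices with $\mathcal{T}^c=(V_1,V_2,V_3)\cdot\mathcal{T}$. For each $j$ let $k_1<\dots<k_{r_j}$ be the indices of the nonzero rows of the flattening $\mathcal{T}^c_j$, and let $U_j$ be the $n_j\times r_j$ matrix with columns $\mathbf{e}_{k_1},\dots,\mathbf{e}_{k_{r_j}}$ (standard basis vectors of $\mathbb{C}^{n_j}$). Put $\mathcal{C}^c=(U_1^*,U_2^*,U_3^* )\cdot\mathcal{T}^c$ (the tensor obtained from $\mathcal{T}^c$ by deleting all zero slices). Let $M_j=V_j^{-1}U_j$, let $E_j$ be an $r_j\times r_j$ unitary matrix whose columns are orthonormal eigenvectors of $M_j^*M_j$, and let $D_j$ be the diagonal matrix of the corresponding singular values of $M_j$ (square roots of the eigenvalues, in the same order). Set $B_j=E_jD_j^{-1}$, $S_j=M_jB_j$ and $\mathcal{C}=(B_1^{-1},B_2^{-1},B_3^{-1})\cdot\mathcal{C}^c$. Then each $S_j$ is semi-orthogonal ($S_j^*S_j=I_{r_j}$), $\mathcal{T}=(S_1,S_2,S_3)\cdot\mathcal{C}$ and $\mathcal{C}=(S_1^*,S_2^*,S_3^* )\cdot\mathcal{T}$; that is, $\mathcal{C}$ is a core of $\mathcal{T}$.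
   Context: Work over $\mathbb{C}$; $A^*$ is the conjugate transpose. Multilinear multiplication: for matrices $A_r$ of size $m_r\times n_r$ and a tensor $\mathcal{T}=[T_{i,j,k}]$ of dimension $n_1\times n_2\times n_3$, $(A_1,A_2,A_3)\cdot\mathcal{T}$ is the $m_1\times m_2\times m_3$ tensor with entries $\sum_{i',j',k'}(A_1)_{i,i'}(A_2)_{j,j'}(A_3)_{k,k'}T_{i',j',k'}$. Flattenings: $\mathcal{T}_1$ is the $n_1\times(n_2n_3)$ matrix whose row $i$ contains the entries $T_{i,j,k}$; $\mathcal{T}_2,\mathcal{T}_3$ analogously; the multilinear rank is $(\mathrm{rk}\,\mathcal{T}_1,\mathrm{rk}\,\mathcal{T}_2,\mathrm{rk}\,\mathcal{T}_3)$. A core of $\mathcal{T}$ with multilinear rank $(r_1,r_2,r_3)$ is a tensor $\mathcal{C}$ of dimension $r_1\times r_2\times r_3$ for which there exist $n_j\times r_j$ matrices $S_j$ with $S_j^*S_j=I_{r_j}$, $(S_1^*,S_2^*,S_3^* )\cdot\mathcal{T}=\mathcal{C}$ and $(S_1,S_2,S_3)\cdot\mathcal{C}=\mathcal{T}$. Trifocal Grassmann tensor: let $P_j$ ($j=1,2,3$) be maximal-rank $(h_j+1)\times(k+1)$ matrices, $h_j\ge2$, with profile $(\alpha_1,\alpha_2,\alpha_3)$ ($1\le\alpha_j\le h_j$, $\sum\alpha_j=k+1$), $s_j=h_j-\alpha_j$. Entries $\mathcal{T}_{I,J,K}$ (multi-indices $I,J,K$ of sizes $s_j+1$, lexicographically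 ordered) are the determinants of the square submatrices of $[P_1^T|P_2^T|P_3^T]$ formed by the columns of block 1 not in $I$, block 2 not in $J$, block 3 not in $K$. Genericity Assumption: with $L_j$ the column space of $P_j^T$, $L_t+(L_r\cap L_s)=\mathbb{C}^{k+1}$ for all $\{r,s,t\}=\{1,2,3\}$. With $i=h_1+h_2+h_3+1-2k$, $j_{r,s}=k-h_t$, there are $H_j\in GL(h_j+1)$, $K\in GL(k+1)$ with $[(H_1P_1K)^T|(H_2P_2K)^T|(H_3P_3K)^T]=\Phi$, where (row blocks of sizes $i,j_{1,2},j_{1,3},j_{2,3}$) $$\Phi=\left[\begin{array}{ccc|ccc|ccc} I_i&0&0&I_i&0&0&I_i&0&0\\ 0&I_{j_{1,2}}&0&0&I_{j_{1,2}}&0&0&0&0\\ 0&0&I_{j_{1,3}}&0&0&0&0&I_{j_{1,3}}&0\\ 0&0&0&0&0&I_{j_{2,3}}&0&0&I_{j_{2,3}}\end{array}\right],$$ and the canonical form $\mathcal{T}^c$ is the Grassmann tensor of the same profile computed from $\Phi$. In the canonical form, every column of each flattening $\mathcal{T}^c_j$ is either zero or a standard basis vector up to sign (at most one nonzero entry per column, equal to $\pm1$), and the multilinear ranks of $\mathcal{T}$ and $\mathcal{T}^c$ agree. *)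

(* Defs.v *)
(* Complex numbers: an arbitrary numClosedFieldType C
   (algebraically closed field with conjugation and order on reals;
   the complex numbers are an instance). *)
From HB Require Import structures.
From mathcomp Require Import all_boot all_order all_algebra.
Set Implicit Arguments. Unset Strict Implicit. Unset Printing Implicit Defensive.
Import Order.TTheory GRing.Theory Num.Theory.
Local Open Scope ring_scope.

(* all increasing lists of length m drawn from l (in lexicographic order
   when l is increasing) *)
Fixpoint combs (l : seq nat) (m : nat) {struct l} : seq (seq nat) :=
  match m, l with
  | 0%N, _ => [:: [::]]
  | _.+1, [::] => [::]
  | m'.+1, x :: l' => map (cons x) (combs l' m') ++ combs l' m
  end.

(* multi-indices of size s+1 = h - a + 1 in {0..h}, lexicographically ordered,
   where a is the profile entry alpha and s = h - alpha *)
Definition midx (h a : nat) : seq (seq nat) := combs (iota 0 h.+1) (h - a).+1.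
Definition mdim (h a : nat) : nat := size (midx h a).

Definition mcomp (h a : nat) (I : 'I_(mdim h a)) : seq nat :=
  [seq x <- iota 0 h.+1 | x \notin nth [::] (midx h a) I].

Section Defs.
Variable C : numClosedFieldType.

Definition ctrmx m n (A : 'M[C]_(m, n)) : 'M[C]_(n, m) := (map_mx Num.conj A)^T.

Definition tensor (n1 n2 n3 : nat) := 'I_n1 -> 'I_n2 -> 'I_n3 -> C.

Definition mlmul m1 m2 m3 n1 n2 n3 (A1 : 'M[C]_(m1, n1)) (A2 : 'M[C]_(m2, n2))
  (A3 : 'M[C]_(m3, n3)) (T : tensor n1 n2 n3) : tensor m1 m2 m3 :=
  fun i j l => \sum_(i' < n1) \sum_(j' < n2) \sum_(l' < n3)
                 A1 i i' * A2 j j' * A3 l l' * T i' j' l'.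

(* flattenings (column order is immaterial for ranks and zero rows) *)
Definition flat1 n1 n2 n3 (T : tensor n1 n2 n3) : 'M[C]_(n1, n2 * n3) :=
  \matrix_(i < n1) mxvec (\matrix_(j < n2, l < n3) T i j l).
Definition flat2 n1 n2 n3 (T : tensor n1 n2 n3) : 'M[C]_(n2, n1 * n3) :=
  \matrix_(j < n2) mxvec (\matrix_(i < n1, l < n3) T i j l).
Definition flat3 n1 n2 n3 (T : tensor n1 n2 n3) : 'M[C]_(n3, n1 * n2) :=
  \matrix_(l < n3) mxvec (\matrix_(i < n1, j < n2) T i j l).

(* Trifocal Grassmann tensor of profile (a1,a2,a3): entry (I,J,K) is the
   determinant of the square submatrix of [P1^T | P2^T | P3^T] formed by the
   columns of block 1 not in I, of block 2 not in J, of block 3 not in K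
   (in this order, increasing within each block). Column x of block b is the
   transpose of row x of P_b. *)
Definition grassmann (k h1 h2 h3 a1 a2 a3 : nat) (P1 : 'M[C]_(h1.+1, k.+1))
  (P2 : 'M[C]_(h2.+1, k.+1)) (P3 : 'M[C]_(h3.+1, k.+1)) :
  tensor (mdim h1 a1) (mdim h2 a2) (mdim h3 a3) :=
  fun I J K =>
    let sel := [seq (0%N, x) | x <- mcomp I] ++ [seq (1%N, x) | x <- mcomp J]
               ++ [seq (2%N, x) | x <- mcomp K] in
    \det (\matrix_(r < k.+1, c < k.+1)
            let bx := nth (0%N, 0%N) sel c in
            if bx.1 == 0%N then P1 (inord bx.2) r
            else if bx.1 == 1%N then P2 (inord bx.2) r
            else P3 (inord bx.2) r).

(* Genericity Assumption: L_t + (L_r :&: L_s) = C^{k+1}, L_j = column space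
   of P_j^T = row space of P_j *)
Definition genericity k h1 h2 h3 (P1 : 'M[C]_(h1.+1, k.+1))
  (P2 : 'M[C]_(h2.+1, k.+1)) (P3 : 'M[C]_(h3.+1, k.+1)) : Prop :=
  [/\ row_full (P3 + (P1 :&: P2))%MS, row_full (P2 + (P1 :&: P3))%MS
    & row_full (P1 + (P2 :&: P3))%MS].

(* The canonical cameras: (Pc_j)^T is the j-th column block of Phi, with row
   blocks of sizes i, j12, j13, j23. *)
Definition phi_i h1 h2 h3 k := (h1 + h2 + h3 + 1 - 2 * k)%N.
Definition canP1 k h1 : 'M[C]_(h1.+1, k.+1) :=
  \matrix_(c < h1.+1, r < k.+1) ((r : nat) == c)%:R.
Definition canP2 k h1 h2 h3 : 'M[C]_(h2.+1, k.+1) :=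
  \matrix_(c < h2.+1, r < k.+1)
    (if (c < phi_i h1 h2 h3 k + (k - h3))%N then (r : nat) == c
     else (r : nat) == (c + (k - h2))%N)%:R.
Definition canP3 k h1 h2 h3 : 'M[C]_(h3.+1, k.+1) :=
  \matrix_(c < h3.+1, r < k.+1)
    (if (c < phi_i h1 h2 h3 k)%N then (r : nat) == c
     else (r : nat) == (c + (k - h3))%N)%:R.

Arguments grassmann {k h1 h2 h3} a1 a2 a3 P1 P2 P3 _ _ _.
Definition canonical_form k h1 h2 h3 a1 a2 a3 :
  tensor (mdim h1 a1) (mdim h2 a2) (mdim h3 a3) :=
  grassmann a1 a2 a3 (canP1 k h1) (canP2 k h1 h2 h3) (canP3 k h1 h2 h3).

Definition selmx n r (kk : 'I_r -> 'I_n) : 'M[C]_(n, r) :=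
  \matrix_(i < n, a < r) (i == kk a)%:R.

End Defs.
Arguments grassmann {C k h1 h2 h3} a1 a2 a3 P1 P2 P3 _ _ _.
Arguments canonical_form : clear implicits.
Arguments selmx C {n r} kk.
Arguments ctrmx {C m n} A.

(* Main.v *)
Require Import Defs.
From HB Require Import structures.
From mathcomp Require Import all_boot all_order all_algebra.
From Stdlib Require Import FunctionalExtensionality.
Import Order.TTheory GRing.Theory Num.Theory.
Local Open Scope ring_scope.
Set Implicit Arguments. Unset Strict Implicit.

Section Aux.
Variable C : numClosedFieldType.

Lemma tensor_ext n1 n2 n3 (T T' : tensor C n1 n2 n3) :
  (forall i j l, T i j l = T' i j l) -> T = T'.
Proof.
move=> H; apply: functional_extensionality => i.
apply: functional_extensionality => j; apply: functional_extensionality => l.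
exact: H.
Qed.

Definition m1 m n1 n2 n3 (A : 'M[C]_(m, n1)) (T : tensor C n1 n2 n3)
  : tensor C m n2 n3 := fun i j l => \sum_(i' < n1) A i i' * T i' j l.
Definition m2 m n1 n2 n3 (A : 'M[C]_(m, n2)) (T : tensor C n1 n2 n3)
  : tensor C n1 m n3 := fun i j l => \sum_(j' < n2) A j j' * T i j' l.
Definition m3 m n1 n2 n3 (A : 'M[C]_(m, n3)) (T : tensor C n1 n2 n3)
  : tensor C n1 n2 m := fun i j l => \sum_(l' < n3) A l l' * T i j l'.

Lemma mlmulE m1' m2' m3' n1 n2 n3 (A1 : 'M[C]_(m1', n1)) (A2 : 'M[C]_(m2', n2))
  (A3 : 'M[C]_(m3', n3)) T :
  mlmul A1 A2 A3 T = m1 A1 (m2 A2 (m3 A3 T)).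
Proof.
apply: tensor_ext => i j l; rewrite /mlmul /m1 /m2 /m3.
apply: eq_bigr => i' _; rewrite mulr_sumr; apply: eq_bigr => j' _.
rewrite mulr_sumr mulr_sumr; apply: eq_bigr => l' _.
by rewrite !mulrA.
Qed.

Lemma m1M p m n1 n2 n3 (A : 'M[C]_(p, m)) (B : 'M[C]_(m, n1)) (T : tensor C n1 n2 n3) :
  m1 A (m1 B T) = m1 (A *m B) T.
Proof.
apply: tensor_ext => i j l; rewrite /m1.
under eq_bigr do rewrite mulr_sumr.
rewrite exchange_big /=; apply: eq_bigr => i' _.
rewrite !mxE mulr_suml; apply: eq_bigr => x _; by rewrite mulrA.
Qed.
Lemma m2M p m n1 n2 n3 (A : 'M[C]_(p, m)) (B : 'M[C]_(m, n2)) (T : tensor C n1 n2 n3) :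
  m2 A (m2 B T) = m2 (A *m B) T.
Proof.
apply: tensor_ext => i j l; rewrite /m2.
under eq_bigr do rewrite mulr_sumr.
rewrite exchange_big /=; apply: eq_bigr => i' _.
rewrite !mxE mulr_suml; apply: eq_bigr => x _; by rewrite mulrA.
Qed.
Lemma m3M p m n1 n2 n3 (A : 'M[C]_(p, m)) (B : 'M[C]_(m, n3)) (T : tensor C n1 n2 n3) :
  m3 A (m3 B T) = m3 (A *m B) T.
Proof.
apply: tensor_ext => i j l; rewrite /m3.
under eq_bigr do rewrite mulr_sumr.
rewrite exchange_big /=; apply: eq_bigr => i' _.
rewrite !mxE mulr_suml; apply: eq_bigr => x _; by rewrite mulrA.
Qed.

Lemma m12 p q n1 n2 n3 (A : 'M[C]_(p, n1)) (B : 'M[C]_(q, n2)) (T : tensor C n1 n2 n3) :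
  m1 A (m2 B T) = m2 B (m1 A T).
Proof.
apply: tensor_ext => i j l; rewrite /m1 /m2.
under eq_bigr do rewrite mulr_sumr.
rewrite exchange_big /=; apply: eq_bigr => j' _.
rewrite mulr_sumr; apply: eq_bigr => x _; by rewrite !mulrA [A _ _ * _]mulrC.
Qed.
Lemma m13 p q n1 n2 n3 (A : 'M[C]_(p, n1)) (B : 'M[C]_(q, n3)) (T : tensor C n1 n2 n3) :
  m1 A (m3 B T) = m3 B (m1 A T).
Proof.
apply: tensor_ext => i j l; rewrite /m1 /m3.
under eq_bigr do rewrite mulr_sumr.
rewrite exchange_big /=; apply: eq_bigr => j' _.
rewrite mulr_sumr; apply: eq_bigr => x _; by rewrite !mulrA [A _ _ * _]mulrC.
Qed.
Lemma m23 p q n1 n2 n3 (A : 'M[C]_(p, n2)) (B : 'M[C]_(q, n3)) (T : tensor C n1 n2 n3) :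
  m2 A (m3 B T) = m3 B (m2 A T).
Proof.
apply: tensor_ext => i j l; rewrite /m2 /m3.
under eq_bigr do rewrite mulr_sumr.
rewrite exchange_big /=; apply: eq_bigr => j' _.
rewrite mulr_sumr; apply: eq_bigr => x _; by rewrite !mulrA [A _ _ * _]mulrC.
Qed.

Lemma mlmul_comp p1 p2 p3 q1 q2 q3 n1 n2 n3 (A1 : 'M[C]_(p1, q1))
  (A2 : 'M[C]_(p2, q2)) (A3 : 'M[C]_(p3, q3)) (B1 : 'M[C]_(q1, n1))
  (B2 : 'M[C]_(q2, n2)) (B3 : 'M[C]_(q3, n3)) T :
  mlmul A1 A2 A3 (mlmul B1 B2 B3 T) = mlmul (A1 *m B1) (A2 *m B2) (A3 *m B3) T.
Proof.
rewrite !mlmulE -m3M -m2M -m1M; congr (m1 _ _).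
rewrite -m13 -m12; congr (m1 _ _); congr (m2 _ _).
by rewrite -m23.
Qed.

Lemma m1_id n1 n2 n3 (T : tensor C n1 n2 n3) : m1 1%:M T = T.
Proof.
apply: tensor_ext => i j l; rewrite /m1 (bigD1 i) //= big1 ?addr0.
  by rewrite mxE eqxx mul1r.
by move=> x /negPf nx; rewrite mxE eq_sym nx mul0r.
Qed.
Lemma m2_id n1 n2 n3 (T : tensor C n1 n2 n3) : m2 1%:M T = T.
Proof.
apply: tensor_ext => i j l; rewrite /m2 (bigD1 j) //= big1 ?addr0.
  by rewrite mxE eqxx mul1r.
by move=> x /negPf nx; rewrite mxE eq_sym nx mul0r.
Qed.
Lemma m3_id n1 n2 n3 (T : tensor C n1 n2 n3) : m3 1%:M T = T.
Proof.
apply: tensor_ext => i j l; rewrite /m3 (bigD1 l) //= big1 ?addr0.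
  by rewrite mxE eqxx mul1r.
by move=> x /negPf nx; rewrite mxE eq_sym nx mul0r.
Qed.

Lemma mlmul_id n1 n2 n3 (T : tensor C n1 n2 n3) : mlmul 1%:M 1%:M 1%:M T = T.
Proof. by rewrite mlmulE m3_id m2_id m1_id. Qed.


Lemma ctrmx_mul m n p (A : 'M[C]_(m, n)) (B : 'M[C]_(n, p)) :
  ctrmx (A *m B) = ctrmx B *m ctrmx A.
Proof. by rewrite /ctrmx map_mxM trmx_mul. Qed.

Lemma ctrmx_selmx n r (kk : 'I_r -> 'I_n) : ctrmx (selmx C kk) = (selmx C kk)^T.
Proof. by apply/matrixP => i j; rewrite !mxE conjC_nat. Qed.

Lemma ctrmx_eq0 n (y : 'cV[C]_n) : ctrmx y *m y = 0 -> y = 0.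
Proof.
move=> H; have := congr1 (fun M : 'M[C]_1 => M 0 0) H; rewrite !mxE => Hs.
apply/matrixP => i j; rewrite (ord1 j) mxE.
have P : forall i0 : 'I_n, true -> 0 <= ctrmx y 0 i0 * y i0 0.
  by move=> i0 _; rewrite !mxE -normCKC exprn_ge0.
have := psumr_eq0P P Hs (i := i) isT.
by rewrite !mxE -normCKC => /eqP; rewrite expf_eq0 /= normr_eq0 => /eqP.
Qed.

Lemma sel_inj n r (kk : 'I_r -> 'I_n) :
  (forall x y : 'I_r, (x < y)%N -> (kk x < kk y)%N) -> injective kk.
Proof.
move=> H x y Hxy; case: (ltngtP x y) => [h|h|/val_inj //].
  by have := H _ _ h; rewrite Hxy ltnn.
by have := H _ _ h; rewrite Hxy ltnn.
Qed.

Lemma proj_sum n r (kk : 'I_r -> 'I_n) (f : 'I_n -> C) i :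
  injective kk -> (~~ [exists a, kk a == i] -> f i = 0) ->
  \sum_i' (selmx C kk *m ctrmx (selmx C kk)) i i' * f i' = f i.
Proof.
move=> inj Hf; rewrite ctrmx_selmx.
under eq_bigr do rewrite mxE mulr_suml.
rewrite exchange_big /=.
under eq_bigr => a _.
  rewrite (bigD1 (kk a)) //= big1 ?addr0; last first.
    by move=> x /negPf nx; rewrite !mxE nx !mulr0 mul0r.
  rewrite !mxE eqxx mulr1; over.
case: (boolP [exists a, kk a == i]) => [/existsP[a /eqP ea]|na].
  rewrite (bigD1 a) //= big1 ?addr0; first by rewrite -ea eqxx mul1r.
  move=> x nx; rewrite -ea (inj_eq inj) eq_sym (negPf nx) mul0r //.
rewrite Hf // big1 // => a _.
suff -> : (i == kk a) = false by rewrite mul0r.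
apply: negbTE; apply: contra na => /eqP ->; apply/existsP; by exists a.
Qed.

Lemma m1_proj n1 n2 n3 r (kk : 'I_r -> 'I_n1) (T : tensor C n1 n2 n3) :
  injective kk -> (forall i, row i (flat1 T) != 0 = [exists a, kk a == i]) ->
  m1 (selmx C kk *m ctrmx (selmx C kk)) T = T.
Proof.
move=> inj H; apply: tensor_ext => i j l; rewrite /m1.
rewrite (@proj_sum _ _ kk (fun i' => T i' j l) i inj) // => ne.
move: ne; rewrite -H negbK => /eqP; rewrite /flat1 rowK => /eqP.
rewrite mxvec_eq0 => /eqP /matrixP /(_ j l); by rewrite !mxE.
Qed.
Lemma m2_proj n1 n2 n3 r (kk : 'I_r -> 'I_n2) (T : tensor C n1 n2 n3) :
  injective kk -> (forall i, row i (flat2 T) != 0 = [exists a, kk a == i]) ->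
  m2 (selmx C kk *m ctrmx (selmx C kk)) T = T.
Proof.
move=> inj H; apply: tensor_ext => i j l; rewrite /m2.
rewrite (@proj_sum _ _ kk (fun j' => T i j' l) j inj) // => ne.
move: ne; rewrite -H negbK => /eqP; rewrite /flat2 rowK => /eqP.
rewrite mxvec_eq0 => /eqP /matrixP /(_ i l); by rewrite !mxE.
Qed.
Lemma m3_proj n1 n2 n3 r (kk : 'I_r -> 'I_n3) (T : tensor C n1 n2 n3) :
  injective kk -> (forall i, row i (flat3 T) != 0 = [exists a, kk a == i]) ->
  m3 (selmx C kk *m ctrmx (selmx C kk)) T = T.
Proof.
move=> inj H; apply: tensor_ext => i j l; rewrite /m3.
rewrite (@proj_sum _ _ kk (fun l' => T i j l') l inj) // => ne.
move: ne; rewrite -H negbK => /eqP; rewrite /flat3 rowK => /eqP.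
rewrite mxvec_eq0 => /eqP /matrixP /(_ i j); by rewrite !mxE.
Qed.


Lemma svd_part n r (M : 'M[C]_(n, r)) (E : 'M[C]_r) (d : 'rV[C]_r) :
  (forall x : 'cV_r, M *m x = 0 -> x = 0) ->
  ctrmx E *m E = 1%:M -> (forall a, 0 <= d 0 a) ->
  (forall a, (ctrmx M *m M) *m col a E = (d 0 a ^+ 2) *: col a E) ->
  (E *m invmx (diag_mx d)) \in unitmx /\
  ctrmx (M *m (E *m invmx (diag_mx d))) *m (M *m (E *m invmx (diag_mx d))) = 1%:M.
Proof.
move=> Minj HE dge0 Heig.
set X := ctrmx M *m M.
have XE : X *m E = E *m diag_mx (\row_a (d 0 a ^+ 2)).
  apply/matrixP => i a.
  rewrite mul_mx_diag [in RHS]mxE [in RHS]mxE.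
  have -> : (X *m E) i a = (col a (X *m E)) i 0 by rewrite [in RHS]mxE.
  have -> : col a (X *m E) = X *m col a E by rewrite !colE mulmxA.
  by rewrite Heig !mxE mulrC.
have dnz : forall a, d 0 a != 0.
  move=> a; apply/negP => /eqP da.
  have Mx : M *m col a E = 0.
    apply: ctrmx_eq0.
    rewrite ctrmx_mul -mulmxA (mulmxA (ctrmx M)) -/X Heig da expr0n /= scale0r.
    by rewrite mulmx0.
  have x0 := Minj _ Mx.
  have := congr1 (fun A : 'M[C]_r => A a a) HE.
  rewrite !mxE eqxx /= big1 => [/eqP|i _]; first by rewrite eq_sym oner_eq0.
  have := congr1 (fun A : 'cV[C]_r => A i 0) x0.
  by rewrite !mxE => ->; rewrite mulr0.
set Di := diag_mx (\row_a (d 0 a)^-1).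
have DDi : diag_mx d *m Di = 1%:M.
  rewrite mulmx_diag; apply/matrixP => i j; rewrite !mxE.
  by case: (i == j); rewrite ?mulr1n ?mulr0n // mulfV.
have [Du _] := mulmx1_unit DDi.
have invD : invmx (diag_mx d) = Di.
  by rewrite -[LHS]mulmx1 -DDi mulmxA mulVmx // mul1mx.
have [Eu _] : E \in unitmx /\ ctrmx E \in unitmx.
  have [h1 h2] := mulmx1_unit HE; by split.
rewrite invD; split; first by rewrite unitmx_mul Eu /= -invD unitmx_inv.
have cDi : ctrmx Di = Di.
  rewrite /ctrmx map_diag_mx tr_diag_mx; congr diag_mx.
  apply/matrixP => i j; rewrite !mxE; apply: geC0_conj.
  by rewrite invr_ge0.
rewrite !ctrmx_mul cDi.
rewrite -!mulmxA (mulmxA (ctrmx M)) -/X (mulmxA X) XE.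
rewrite !mulmxA -(mulmxA Di) HE mulmx1 !mulmx_diag.
apply/matrixP => i j; rewrite !mxE.
case: (i == j); rewrite ?mulr1n ?mulr0n //.
by rewrite expr2 mulrA mulVf // mul1r mulfV.
Qed.

Lemma selmx_mul_inj n r (kk : 'I_r -> 'I_n) (V : 'M[C]_n) (x : 'cV[C]_r) :
  injective kk -> V \in unitmx -> invmx V *m selmx C kk *m x = 0 -> x = 0.
Proof.
move=> inj uV h.
have h2 : selmx C kk *m x = 0.
  by rewrite -[LHS]mul1mx -(mulmxV uV) -!mulmxA (mulmxA (invmx V)) h mulmx0.
apply/matrixP => a j; rewrite (ord1 j).
have := congr1 (fun A : 'cV[C]_n => A (kk a) 0) h2.
rewrite !mxE (bigD1 a) //= big1 ?addr0.
  by rewrite !mxE eqxx mul1r.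
by move=> b nb; rewrite !mxE (inj_eq inj) eq_sym (negPf nb) mul0r.
Qed.
End Aux.

Theorem mainTheorem6 (C : numClosedFieldType) (k h1 h2 h3 a1 a2 a3 : nat)
  (P1 : 'M[C]_(h1.+1, k.+1)) (P2 : 'M[C]_(h2.+1, k.+1))
  (P3 : 'M[C]_(h3.+1, k.+1))
  (hh1 : (2 <= h1)%N) (hh2 : (2 <= h2)%N) (hh3 : (2 <= h3)%N)
  (rkP1 : \rank P1 = minn h1.+1 k.+1) (rkP2 : \rank P2 = minn h2.+1 k.+1)
  (rkP3 : \rank P3 = minn h3.+1 k.+1)
  (ha1 : (1 <= a1 <= h1)%N) (ha2 : (1 <= a2 <= h2)%N) (ha3 : (1 <= a3 <= h3)%N)
  (hsum : (a1 + a2 + a3)%N = k.+1)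
  (hgen : genericity P1 P2 P3) :
  let T := grassmann a1 a2 a3 P1 P2 P3 in
  let Tc := canonical_form C k h1 h2 h3 a1 a2 a3 in
  forall (r1 r2 r3 : nat),
  \rank (flat1 T) = r1 -> \rank (flat2 T) = r2 -> \rank (flat3 T) = r3 ->
  forall (V1 : 'M[C]_(mdim h1 a1)) (V2 : 'M[C]_(mdim h2 a2))
         (V3 : 'M[C]_(mdim h3 a3)),
  V1 \in unitmx -> V2 \in unitmx -> V3 \in unitmx ->
  (forall i j l, Tc i j l = mlmul V1 V2 V3 T i j l) ->
  (* k_1 < ... < k_{r_j}: the indices of the nonzero rows of Tc_j *)
  forall (kk1 : 'I_r1 -> 'I_(mdim h1 a1)) (kk2 : 'I_r2 -> 'I_(mdim h2 a2))
         (kk3 : 'I_r3 -> 'I_(mdim h3 a3)),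
  (forall x y : 'I_r1, (x < y)%N -> (kk1 x < kk1 y)%N) ->
  (forall x y : 'I_r2, (x < y)%N -> (kk2 x < kk2 y)%N) ->
  (forall x y : 'I_r3, (x < y)%N -> (kk3 x < kk3 y)%N) ->
  (forall i, (row i (flat1 Tc) != 0) = [exists a, kk1 a == i]) ->
  (forall i, (row i (flat2 Tc) != 0) = [exists a, kk2 a == i]) ->
  (forall i, (row i (flat3 Tc) != 0) = [exists a, kk3 a == i]) ->
  let U1 := selmx C kk1 in let U2 := selmx C kk2 in let U3 := selmx C kk3 in
  let Ccc := mlmul (ctrmx U1) (ctrmx U2) (ctrmx U3) Tc in
  let M1 := invmx V1 *m U1 in let M2 := invmx V2 *m U2 in
  let M3 := invmx V3 *m U3 in
  (* E_j unitary, its columns eigenvectors of M_j^* M_j; D_j = diag d_j with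
     d_j the corresponding singular values (nonnegative square roots of the
     eigenvalues), in the same order *)
  forall (E1 : 'M[C]_r1) (E2 : 'M[C]_r2) (E3 : 'M[C]_r3)
         (d1 : 'rV[C]_r1) (d2 : 'rV[C]_r2) (d3 : 'rV[C]_r3),
  ctrmx E1 *m E1 = 1%:M -> ctrmx E2 *m E2 = 1%:M -> ctrmx E3 *m E3 = 1%:M ->
  (forall a, 0 <= d1 0 a) -> (forall a, 0 <= d2 0 a) -> (forall a, 0 <= d3 0 a) ->
  (forall a, (ctrmx M1 *m M1) *m col a E1 = (d1 0 a ^+ 2) *: col a E1) ->
  (forall a, (ctrmx M2 *m M2) *m col a E2 = (d2 0 a ^+ 2) *: col a E2) ->
  (forall a, (ctrmx M3 *m M3) *m col a E3 = (d3 0 a ^+ 2) *: col a E3) ->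
  let B1 := E1 *m invmx (diag_mx d1) in let B2 := E2 *m invmx (diag_mx d2) in
  let B3 := E3 *m invmx (diag_mx d3) in
  let S1 := M1 *m B1 in let S2 := M2 *m B2 in let S3 := M3 *m B3 in
  let Cr := mlmul (invmx B1) (invmx B2) (invmx B3) Ccc in
  [/\ ctrmx S1 *m S1 = 1%:M, ctrmx S2 *m S2 = 1%:M, ctrmx S3 *m S3 = 1%:M,
      (forall i j l, T i j l = mlmul S1 S2 S3 Cr i j l)
    & (forall i j l, Cr i j l = mlmul (ctrmx S1) (ctrmx S2) (ctrmx S3) T i j l)].
Proof.
move=> T Tc r1 r2 r3 _ _ _ V1 V2 V3 uV1 uV2 uV3 HTc kk1 kk2 kk3 mon1 mon2 mon3
  z1 z2 z3 U1 U2 U3 Ccc M1 M2 M3 E1 E2 E3 d1 d2 d3 hE1 hE2 hE3 g1 g2 g3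
  e1 e2 e3 B1 B2 B3 S1 S2 S3 Cr.
have inj1 := sel_inj mon1; have inj2 := sel_inj mon2; have inj3 := sel_inj mon3.
have [uB1 SS1] := svd_part (fun x => @selmx_mul_inj C _ _ kk1 V1 x inj1 uV1) hE1 g1 e1.
have [uB2 SS2] := svd_part (fun x => @selmx_mul_inj C _ _ kk2 V2 x inj2 uV2) hE2 g2 e2.
have [uB3 SS3] := svd_part (fun x => @selmx_mul_inj C _ _ kk3 V3 x inj3 uV3) hE3 g3 e3.
have HTc' : Tc = mlmul V1 V2 V3 T by apply: tensor_ext.
have Hproj : mlmul (U1 *m ctrmx U1) (U2 *m ctrmx U2) (U3 *m ctrmx U3) Tc = Tc.
  by rewrite mlmulE m3_proj // m2_proj // m1_proj.
have HT : T = mlmul S1 S2 S3 Cr.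
  rewrite /Cr /S1 /S2 /S3 mlmul_comp !mulmxK // /Ccc mlmul_comp /M1 /M2 /M3.
  rewrite -!mulmxA -mlmul_comp Hproj HTc' mlmul_comp !mulVmx //.
  by rewrite mlmul_id.
split => //.
- by move=> i j l; rewrite -HT.
move=> i j l; rewrite HT mlmul_comp SS1 SS2 SS3 mlmul_id //.
Qed.
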